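(* In the model described in the context, with $\tilde k(p)=(1+\theta)\big(1-(1-p)^c\big)$ for $c>1$ and $\theta\ge0$, the indemnity $I\equiv0$ is never optimal.
   Context: Let $X\ge0$ be a random variable with $\mathbb{P}(X=0)=1-q$, where $q\in(0,1]$, and with density $q\lambda e^{-\lambda x}$ on $(0,\infty)$, where $\lambda>0$. So $S_X(t)=qe^{-\lambda t}$ for $t\ge0$. $\mathcal{I}_c$ is the set of $I:[0,\infty)\to[0,\infty)$ with $0\le I(x)\le x$ and $0\le I(x)-I(y)\le x-y$ for $0\le y\le x$. For $Y\ge0$ with $S_Y(t)=\mathbb{P}(Y>t)$, the premium is $$\pi(Y)=\int_0^\infty\tilde k(S_Y(t))\,dt.$$ The buyer has wealth $w$ and utility $u$ with $u'(x)=e^{-\gamma x}$, $\gamma>0$. She chooses $I\in\mathcal{I}_c$ to maximize $\mathbb{E}[u(w-X+I(X)-\pi(I(X)))]$; the buyer's distortion is the identity. *)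

(* Defs.v *)
From HB Require Import structures.
From mathcomp Require Import all_boot all_order all_algebra.
From mathcomp Require Import all_classical all_reals all_analysis.
Set Implicit Arguments. Unset Strict Implicit. Unset Printing Implicit Defensive.
Import Order.TTheory GRing.Theory Num.Theory.
Import numFieldNormedType.Exports.
Local Open Scope classical_set_scope.
Local Open Scope ring_scope.

(* The admissible indemnities I_c (only values on [0, +oo) matter). *)
Definition Ic {R : realType} (I : R -> R) : Prop :=
  (forall x, 0 <= x -> 0 <= I x <= x) /\
  (forall x y, 0 <= y -> y <= x -> 0 <= I x - I y <= x - y).

Definition ktilde {R : realType} (theta c : R) (p : R) : R :=
  (1 + theta) * (1 - (1 - p) `^ c).

Definition survival {R : realType} {d} {T : measurableType d}
  (P : probability T R) (Y : T -> R) (t : R) : R :=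
  fine (P [set w | t < Y w]).

Definition premium {R : realType} {d} {T : measurableType d}
  (P : probability T R) (k : R -> R) (Y : T -> R) : R :=
  fine (\int[@lebesgue_measure R]_(t in `[0%R, +oo[%classic)
          (k (survival P Y t))%:E)%E.

Definition expected_utility {R : realType} {d} {T : measurableType d}
  (P : probability T R) (u : R -> R) (k : R -> R) (w : R) (X : T -> R)
  (I : R -> R) : \bar R :=
  (\int[P]_om (u (w - X om + I (X om) - premium P k (I \o X)))%:E)%E.

(* Main.v *)
Require Import Defs.
From HB Require Import structures.
From mathcomp Require Import all_boot all_order all_algebra.
From mathcomp Require Import all_classical all_reals all_analysis.
From mathcomp Require Import ring lra.
From mathcomp Require Import measurable_realfun.
Import Order.TTheory GRing.Theory Num.Theory.
Import numFieldNormedType.Exports.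
Local Open Scope classical_set_scope.
Local Open Scope ring_scope.

Section Helpers.
Set Implicit Arguments. Unset Strict Implicit.


Lemma mF (R : realType) (q lambda dd c theta : R) :
  measurable_fun [set: R] (fun t => ktilde theta c (q * expR (- (lambda * (dd + t))))).
Proof.
rewrite /ktilde.
apply: measurable_funM; first exact: measurable_cst.
apply: measurable_funB; first exact: measurable_cst.
apply: (@measurableT_comp _ _ _ _ _ _ (@powR R ^~ c)); first exact: measurable_powR.
apply: measurable_funB; first exact: measurable_cst.
apply: measurable_funM; first exact: measurable_cst.
apply: measurableT_comp; first exact: measurable_expR.
apply: (@measurable_funN _ _ _ _ (fun t => lambda * (dd + t))).
apply: measurable_funM; first exact: measurable_cst.
apply: measurable_funD; first exact: measurable_cst.
exact: measurable_id.
Qed.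

Lemma mE (R : realType) (lambda : R) :
  measurable_fun [set: R] (fun t => lambda * expR (- lambda * t)).
Proof.
apply: measurable_funM; first exact: measurable_cst.
apply: measurableT_comp; first exact: measurable_expR.
apply: measurable_funM; first exact: measurable_cst.
exact: measurable_id.
Qed.


Lemma u_cont (R : realType) (u : R -> R) gamma :
  (forall x : R, is_derive x (1 : R) u (expR (- (gamma * x)))) -> continuous u.
Proof.
move=> hu x; apply: differentiable_continuous; apply/derivable1_diffP.
by have [] := hu x.
Qed.

Lemma u_bounds (R : realType) (u : R -> R) gamma :
  (forall x : R, is_derive x (1 : R) u (expR (- (gamma * x)))) -> 0 < gamma ->
  forall a b, a <= b ->
  expR (- (gamma * b)) * (b - a) <= u b - u a <= expR (- (gamma * a)) * (b - a).
Proof.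
move=> hu g0 a b; rewrite le_eqVlt => /orP[/eqP <-|ab].
  by rewrite !subrr !mulr0 lexx.
have [c] := @MVT R u (fun x => expR (- (gamma * x))) a b ab (fun x _ => hu x)
  (continuous_subspaceT (@u_cont R u gamma hu)).
rewrite in_itv /= => /andP[ac cb] ->.
have ba : 0 <= b - a by rewrite subr_ge0 ltW.
apply/andP; split; apply: ler_wpM2r => //; rewrite ler_expR lerN2;
  apply: ler_wpM2l; rewrite ?ltW //.
Qed.

Lemma bernoulli_nat (R : realType) (p : R) n : 0 <= p <= 1 ->
  1 - n%:R * p <= (1 - p) ^+ n.
Proof.
move=> /andP[p0 p1]; elim: n => [|n IH]; first by rewrite mul0r subr0 expr0.
rewrite exprS -natr1.
have h : 0 <= 1 - p by rewrite subr_ge0.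
have := ler_wpM2l h IH.
have : 0 <= n%:R * p * p by rewrite mulr_ge0 ?mulr_ge0.
nra.
Qed.

Lemma ktilde_bounds (R : realType) (theta c p : R) n : 0 <= theta -> 0 <= c -> c <= n%:R ->
  0 <= p < 1 -> 0 <= ktilde theta c p <= (1 + theta) * n%:R * p.
Proof.
move=> th0 c0 cn /andP[p0 p1]; rewrite /ktilde.
have h : 0 < 1 - p <= 1 by rewrite subr_gt0 p1 /= lerBlDr lerDl.
have h1 : (1 - p) `^ c <= 1.
  have := @ger_powR R (1 - p) h 0 c c0.
  by rewrite powRr0.
have h2 : (1 - p) ^+ n <= (1 - p) `^ c.
  rewrite -powR_mulrn; first exact: (@ger_powR R (1 - p) h c n%:R cn).
  by rewrite subr_ge0 ltW.
have h3 := @bernoulli_nat R p n; rewrite p0 ltW //= in h3; have {}h3 := h3 isT.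
have t1 : 0 < 1 + theta by lra.
apply/andP; split; first by rewrite mulr_ge0 ?subr_ge0 // ltW.
rewrite -mulrA; apply: ler_wpM2l; first exact: ltW.
have := le_trans h3 h2. lra.
Qed.


Lemma int_expo (R : realType) (lambda : R) : 0 < lambda ->
  (\int[@lebesgue_measure R]_(t in `[0%R, +oo[%classic)
     (lambda * expR (- lambda * t))%:E = 1)%E.
Proof.
move=> l0.
rewrite -(integral_exponential_pdf l0).
transitivity (\int[@lebesgue_measure R]_(t in `[0%R, +oo[%classic)
     (exponential_pdf lambda t)%:E)%E.
  by apply: eq_integral => t; rewrite inE /= in_itv /= andbT => t0; rewrite exponential_pdfE.
rewrite integral_mkcond; apply: eq_integral => t _.
rewrite patchE; case: ifPn => //; rewrite notin_setE /= in_itv /= andbT => t0.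
by rewrite lt0_exponential_pdf // ltNge; apply/negP.
Qed.

Lemma premium0 (R : realType) d (T : measurableType d) (P : probability T R)
  (theta c : R) (X : T -> R) :
  premium P (ktilde theta c) ((fun _ => 0%R) \o X) = 0.
Proof.
rewrite /premium.
transitivity (fine (\int[@lebesgue_measure R]_(t in `[0%R, +oo[%classic) (cst 0%R t)%:E)%E).
  congr fine; apply: eq_integral => t; rewrite inE /= in_itv /= andbT => t0.
  rewrite /survival /=.
  have -> : [set w | t < 0] = set0 :> set T.
    by apply/seteqP; split => w //=; rewrite ltNge t0.
  by rewrite measure0 /= /ktilde subr0 powR1 subrr mulr0.
by rewrite integral0.
Qed.

Definition sl (R : realType) (dd : R) (x : R) : R := if x <= dd then 0 else x - dd.

Lemma premium_sl (R : realType) d (T : measurableType d) (P : probability T R)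
  (X : T -> R) (q lambda c theta dd : R) (n : nat) :
  0 < q -> q <= 1 -> 0 < lambda -> 0 <= c -> c <= n%:R -> 0 <= theta -> 0 < dd ->
  (forall t, 0 <= t -> P [set om | t < X om] = (q * expR (- (lambda * t)))%:E) ->
  0 <= premium P (ktilde theta c) (sl dd \o X) <=
    (1 + theta) * n%:R * q * expR (- (lambda * dd)) / lambda.
Proof.
move=> q0 q1 l0 c0 cn th0 d0 tail.
set K := (1 + theta) * n%:R * q * expR (- (lambda * dd)) / lambda.
have K0 : 0 <= K.
  have t1 : 0 <= 1 + theta by lra.
  by rewrite /K divr_ge0 ?(ltW l0) // !mulr_ge0 ?expR_ge0 ?(ltW q0) ?ler0n.
set F := fun t => ktilde theta c (q * expR (- (lambda * (dd + t)))).
have Fb : forall t, 0 <= t -> 0 <= F t <= K * (lambda * expR (- lambda * t)).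
  move=> t t0.
  have p1 : 0 <= q * expR (- (lambda * (dd + t))) < 1.
    rewrite mulr_ge0 ?expR_ge0 ?ltW //=.
    have : expR (- (lambda * (dd + t))) < 1.
      rewrite expR_lt1 oppr_lt0; apply: mulr_gt0 => //; lra.
    have : 0 <= expR (- (lambda * (dd + t))) by exact: expR_ge0.
    move=> h1 h2; nra.
  have := ktilde_bounds th0 c0 cn p1.
  have -> : K * (lambda * expR (- lambda * t)) =
     (1 + theta) * n%:R * (q * expR (- (lambda * (dd + t)))).
    rewrite /K mulrDr opprD expRD mulNr; field; exact: lt0r_neq0.
  by [].
have IE : (\int[@lebesgue_measure R]_(t in `[0%R, +oo[%classic)
      (ktilde theta c (survival P (sl dd \o X) t))%:E =
    \int[@lebesgue_measure R]_(t in `[0%R, +oo[%classic) (F t)%:E)%E.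
  apply: eq_integral => t; rewrite inE /= in_itv /= andbT => t0.
  rewrite /survival /F.
  have -> : [set w | t < (sl dd \o X) w] = [set om | dd + t < X om].
    apply/seteqP; split => w /=; rewrite /sl; case: ifPn => h.
    - lra.
    - lra.
    - by rewrite -subr_gt0 => h2; lra.
    - move=> h2; lra.
  have dt : 0 <= dd + t by lra.
  by rewrite (tail _ dt).
have I0 : (0 <= \int[@lebesgue_measure R]_(t in `[0%R, +oo[%classic) (F t)%:E)%E.
  apply: integral_ge0 => t; rewrite /= in_itv /= andbT => t0.
  by rewrite lee_fin; case/andP: (Fb t t0).
have IK : (\int[@lebesgue_measure R]_(t in `[0%R, +oo[%classic) (F t)%:E <= K%:E)%E.
  apply: (@le_trans _ _ (\int[@lebesgue_measure R]_(t in `[0%R, +oo[%classic)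
     ((K * (lambda * expR (- lambda * t)))%:E))%E).
    apply: ge0_le_integral.
    - exact: measurable_itv.
    - by move=> t; rewrite /= in_itv /= andbT => t0; rewrite lee_fin; case/andP: (Fb t t0).
    - apply/measurable_EFinP; apply: measurable_funTS; exact: mF.
    - apply/measurable_EFinP; apply: measurable_funTS; apply: measurable_funM.
      + exact: measurable_cst.
      + exact: mE.
    - by move=> t; rewrite /= in_itv /= andbT => t0; rewrite lee_fin; case/andP: (Fb t t0).
  rewrite (_ : \int[@lebesgue_measure R]_(t in `[0%R, +oo[%classic) _ =
     \int[@lebesgue_measure R]_(t in `[0%R, +oo[%classic) (K%:E * (lambda * expR (- lambda * t))%:E))%E; last first.
    by apply: eq_integral => t _; rewrite EFinM.
  rewrite ge0_integralZl_EFin //.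
  - by rewrite int_expo // mule1.
  - by move=> t _; rewrite lee_fin; apply: mulr_ge0; [exact: ltW | exact: expR_ge0].
  - by apply/measurable_EFinP; apply: measurable_funTS; exact: mE.
rewrite /premium IE; apply/andP; split; first exact: fine_ge0.
have fin : (\int[@lebesgue_measure R]_(t in `[0%R, +oo[%classic) (F t)%:E)%E \is a fin_num.
  by rewrite ge0_fin_numE // (le_lt_trans IK) // ltry.
by rewrite -lee_fin fineK.
Qed.


Lemma pointwise (R : realType) (u : R -> R) (gamma w d0 dd pi x : R) :
  (forall x : R, is_derive x (1 : R) u (expR (- (gamma * x)))) -> 0 < gamma ->
  0 <= x -> 0 <= d0 -> d0 <= dd -> 0 <= pi -> pi <= 1 ->
  - pi * expR (- (gamma * (w - d0 - pi)))
  - pi * expR (- (gamma * (w - dd - pi))) * ((d0 < x)%R)%:R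
  + (1 - pi) * expR (- (gamma * (w - dd - pi))) * ((dd + 1 < x)%R)%:R
  <= u (w - x + sl dd x - pi) - u (w - x + 0 - 0).
Proof.
move=> hu g0 x0 d00 d0d pi0 pi1.
have ub := u_bounds hu g0.
set E0 := expR (- (gamma * (w - d0 - pi))).
set E := expR (- (gamma * (w - dd - pi))).
have E00 : 0 <= E0 by exact: expR_ge0.
have E_0 : 0 <= E by exact: expR_ge0.
have mono : forall a b, a <= b -> expR (- (gamma * b)) <= expR (- (gamma * a)).
  by move=> a b ab; rewrite ler_expR lerN2; apply: ler_wpM2l => //; exact: ltW.
rewrite addr0 subr0 /sl.
case: (lerP x dd) => xd.
- rewrite addr0.
  have [_ h] := andP (ub (w - x - pi) (w - x) ltac:(lra)).
  have h' : u (w - x) - u (w - x - pi) <= expR (- (gamma * (w - x - pi))) * pi.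
    by move: h; have -> : w - x - (w - x - pi) = pi by ring.
  have B0 : (dd + 1 < x)%R = false by apply/negbTE; rewrite -leNgt; lra.
  rewrite B0 mulr0 addr0.
  case: (lerP x d0) => xd0.
  + idtac.
    have : expR (- (gamma * (w - x - pi))) <= E0 by apply: mono; lra.
    move=> hE; rewrite mulr0 subr0. nra.
  + idtac.
    have : expR (- (gamma * (w - x - pi))) <= E by apply: mono; lra.
    move=> hE; rewrite mulr1. nra.
- rewrite (le_lt_trans d0d xd).
  have -> : w - x + (x - dd) - pi = w - dd - pi by ring.
  rewrite mulr1.
  case: (lerP x (dd + 1)) => xd1.
  + idtac.
    rewrite mulr0 addr0.
    case: (lerP x (dd + pi)) => xdp.
    * have [_ h] := andP (ub (w - dd - pi) (w - x) ltac:(lra)).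
      have : E * (w - x - (w - dd - pi)) <= E * pi by apply: ler_wpM2l => //; lra.
      move: h; rewrite -/E => h1 h2. nra.
    * have [h _] := andP (ub (w - x) (w - dd - pi) ltac:(lra)).
      have : 0 <= expR (- (gamma * (w - dd - pi))) * (w - dd - pi - (w - x)).
        by apply: mulr_ge0; [exact: expR_ge0 | lra].
      nra.
  + idtac.
    rewrite mulr1.
    have [h _] := andP (ub (w - x) (w - dd - pi) ltac:(lra)).
    move: h; rewrite -/E => h.
    have : E * (1 - pi) <= E * (w - dd - pi - (w - x)) by apply: ler_wpM2l => //; lra.
    nra.
Qed.


Lemma le_int_mf d (T : measurableType d) (R : realType) (P : probability T R)
  (f h : T -> R) :
  measurable_fun setT f -> P.-integrable setT (EFin \o h) -> (forall x, f x <= h x) ->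
  (\int[P]_x (f x)%:E <= \int[P]_x (h x)%:E)%E.
Proof.
move=> mf ih fh.
have mfE : measurable_fun setT (EFin \o f) by apply/measurable_EFinP.
rewrite integralE [leRHS]integralE leeB//.
- apply: ge0_le_integral => //.
  + exact: measurable_funepos.
  + by move/integrableP : ih => [+ _]; exact: measurable_funepos.
  + move=> x _; apply: (@funepos_le _ _ setT); last exact: in_setT.
    by move=> y _; rewrite lee_fin.
- apply: ge0_le_integral => //.
  + by move/integrableP : ih => [+ _]; exact: measurable_funeneg.
  + exact: measurable_funeneg.
  + move=> x _; apply: (@funeneg_le _ _ setT); last exact: in_setT.
    by move=> y _; rewrite lee_fin.
Qed.

Lemma meas_gt d (T : measurableType d) (R : realType) (X : T -> R) (a : R) :
  measurable_fun setT X -> measurable [set om | a < X om].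
Proof.
move=> mX.
have := mX measurableT _ (measurable_itv `]a, +oo[).
rewrite setTI; congr measurable; apply/seteqP; split => x /=; rewrite in_itv /= andbT //.
Qed.

Lemma int_g d (T : measurableType d) (R : realType) (P : probability T R)
  (X : T -> R) (c1 c2 c3 a b pa pb : R) :
  measurable_fun setT X ->
  P [set om | a < X om] = pa%:E -> P [set om | b < X om] = pb%:E ->
  P.-integrable setT (EFin \o (fun om => c1 - c2 * ((a < X om)%R)%:R + c3 * ((b < X om)%R)%:R)) /\
  (\int[P]_om (c1 - c2 * ((a < X om)%R)%:R + c3 * ((b < X om)%R)%:R)%:E
    = (c1 - c2 * pa + c3 * pb)%:E)%E.
Proof.
move=> mX hA hB.
have mA := meas_gt a mX; have mB := meas_gt b mX.
set A := [set om | a < X om] in mA hA; set B := [set om | b < X om] in mB hB.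
have eA : forall om, ((a < X om)%R)%:R = \1_A om :> R.
  move=> om; rewrite indicE. 
  case: (boolP (a < X om)) => h.
    by rewrite mem_set.
  rewrite memNset //=; exact/negP.
have eB : forall om, ((b < X om)%R)%:R = \1_B om :> R.
  move=> om; rewrite indicE. 
  case: (boolP (b < X om)) => h.
    by rewrite mem_set.
  rewrite memNset //=; exact/negP.
have i1 : P.-integrable setT (EFin \o cst c1) by exact: finite_measure_integrable_cst.
have iA := integrable_indic P mA.
have iB := integrable_indic P mB.
have i2 : P.-integrable setT (fun om => ((- c2)%:E * (\1_A om)%:E)%E).
  by apply: integrableZl.
have i3 : P.-integrable setT (fun om => (c3%:E * (\1_B om)%:E)%E) by apply: integrableZl.
have E : (fun om => (c1 - c2 * ((a < X om)%R)%:R + c3 * ((b < X om)%R)%:R)%:E) =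
   (fun om => ((EFin \o cst c1) om + (- c2)%:E * (\1_A om)%:E) + c3%:E * (\1_B om)%:E)%E.
  by apply/funext => om; rewrite eA eB /= -!EFinM -!EFinD mulNr.
split.
  rewrite /comp /= E.
  by apply: integrableD => //; apply: integrableD.
rewrite E integralD //; last by apply: integrableD.
rewrite integralD // !integralZl //; try exact: (integrable_indic P _).
rewrite !integral_indic // !setIT.
transitivity ((\int[P]_x (EFin \o cst c1) x + (- c2)%:E * pa%:E + c3%:E * pb%:E)%E).
  by congr (_ + _ * _ + _ * _)%E; [exact: hA | exact: hB].
rewrite (_ : EFin \o cst c1 = cst c1%:E) //.
rewrite integral_cst //.
transitivity ((c1%:E * 1 + (- c2)%:E * pa%:E + c3%:E * pb%:E)%E).
  by congr (_ * _ + _ + _)%E; exact: probability_setT.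
rewrite mule1.
by rewrite -!EFinM -!EFinD mulNr.
Qed.


Lemma small (R : realType) (eps : R) : 0 < eps -> exists2 y, 0 < y & expR (- y) < eps.
Proof.
move=> e0; exists eps^-1; first by rewrite invr_gt0.
rewrite expRN -[X in _ < X]invrK ltf_pV2 ?posrE ?expR_gt0 ?invr_gt0 //.
have := expR_ge1Dx eps^-1; lra.
Qed.

Lemma numeric (R : realType) (pi M z e0 e1 q L E a : R) :
  0 <= pi -> pi <= M * z -> M * z <= 1/2 -> 0 < z -> 0 < q -> 0 < L -> 0 < E ->
  0 <= e0 -> 0 <= e1 -> M * e1 < a -> M * q * e0 < a -> a = q * L / 4 ->
  0 < - pi * (E * e1) - pi * E * (q * e0) + (1 - pi) * E * (q * z * L).
Proof.
move=> p0 pM Mz z0 q0 L0 E0 e00 e10 h1 h2 ha.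
have s0 : 0 <= e1 + q * e0 by rewrite addr_ge0 // mulr_ge0 // ltW.
have k1 : pi * (e1 + q * e0) <= M * z * (e1 + q * e0) by apply: ler_wpM2r.
have k2 : M * z * (e1 + q * e0) = z * (M * e1 + M * q * e0) by ring.
have k3 : z * (M * e1 + M * q * e0) < z * (2 * a) by rewrite ltr_pM2l //; lra.
have qzL : 0 < q * z * L by rewrite !mulr_gt0.
have k4 : z * (2 * a) <= (1 - pi) * (q * z * L).
  rewrite ha.
  have -> : z * (2 * (q * L / 4)) = 1/2 * (q * z * L) by field.
  apply: ler_wpM2r; [exact: ltW | lra].
have k5 : pi * (e1 + q * e0) < (1 - pi) * (q * z * L) by lra.
have k6 : E * (pi * (e1 + q * e0)) < E * ((1 - pi) * (q * z * L)) by rewrite ltr_pM2l.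
have -> : - pi * (E * e1) - pi * E * (q * e0) + (1 - pi) * E * (q * z * L) =
  E * ((1 - pi) * (q * z * L)) - E * (pi * (e1 + q * e0)) by ring.
by rewrite subr_gt0.
Qed.

Lemma Ic_sl (R : realType) (dd : R) : 0 < dd -> Ic (sl dd).
Proof.
move=> d0; split.
  by move=> x x0; rewrite /sl; case: (lerP x dd) => h; lra.
by move=> x y y0 yx; rewrite /sl; case: (lerP x dd) => h1; case: (lerP y dd) => h2; lra.
Qed.

End Helpers.

Theorem proposition4p3 (R : realType) (d : measure_display)
  (T : measurableType d) (P : probability T R) (X : T -> R)
  (q lambda gamma w c theta : R) (u : R -> R) :
  0 < q -> q <= 1 -> 0 < lambda -> 0 < gamma -> 1 < c -> 0 <= theta ->
  measurable_fun setT X ->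
  (forall om, 0 <= X om) ->
  P [set om | X om = 0] = (1 - q)%:E ->
  (forall t, 0 <= t -> P [set om | t < X om] = (q * expR (- (lambda * t)))%:E) ->
  (forall x : R, is_derive x (1 : R) u (expR (- (gamma * x)))) ->
  exists I : R -> R, Ic I /\
    (expected_utility P u (ktilde theta c) w X (fun _ => 0%R)
      < expected_utility P u (ktilde theta c) w X I)%E.
Proof.
move=> q0 q1 l0 g0 c1 th0 mX X0 _ tail hu.
have [n cn] : exists n : nat, c <= n%:R.
  by exists (Num.trunc c).+1; apply/ltW/truncnS_gt.
have n0 : 0 < n%:R :> R by lra.
have c0 : 0 <= c by lra.
set M := (1 + theta) * n%:R * q / lambda.
have t1 : 0 < 1 + theta by lra.
have M0 : 0 < M by rewrite /M divr_gt0 // !mulr_gt0.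
set L := expR (- lambda).
have L0 : 0 < L by exact: expR_gt0.
set a := q * L / 4.
have a0 : 0 < a by rewrite /a divr_gt0 // mulr_gt0.
have [ya ya0 hya] := small (divr_gt0 a0 (mulr_gt0 M0 q0)).
have [yb yb0 hyb] : exists2 y : R, 0 < y & expR (- y) < 1 / (2 * M).
  by apply: small; rewrite divr_gt0 // mulr_gt0.
have [y1 y10 hy1] := small (divr_gt0 a0 M0).
set y0 := ya + yb.
have e0a : M * q * expR (- y0) < a.
  have : expR (- y0) <= expR (- ya) by rewrite ler_expR /y0; lra.
  move=> h.
  have hya' : expR (- ya) * (M * q) < a by rewrite -ltr_pdivlMr // mulr_gt0.
  have : M * q * expR (- y0) <= M * q * expR (- ya) by rewrite ler_wpM2l // ltW // mulr_gt0.
  lra.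
have e0b : M * expR (- y0) < 1 / 2.
  have : expR (- y0) <= expR (- yb) by rewrite ler_expR /y0; lra.
  move=> h.
  have hyb' : expR (- yb) * (2 * M) < 1 by rewrite -ltr_pdivlMr // mulr_gt0.
  have : M * expR (- y0) <= M * expR (- yb) by rewrite ler_wpM2l // ltW.
  lra.
have e1a : M * expR (- y1) < a by rewrite mulrC -ltr_pdivlMr.
set d0 := y0 / lambda.
have d00 : 0 < d0 by rewrite divr_gt0 // addr_gt0.
set dd := d0 + y1 / gamma.
have dd0 : 0 < dd by rewrite addr_gt0 // divr_gt0.
have ldd0 : lambda * d0 = y0 by rewrite /d0 mulrC divfK // lt0r_neq0.
have gdd : gamma * (dd - d0) = y1 by rewrite /dd addrAC subrr add0r mulrC divfK // lt0r_neq0.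
set pi := premium P (ktilde theta c) (sl dd \o X).
have /andP[pi0 piK] := premium_sl q0 q1 l0 c0 cn th0 dd0 tail.
rewrite -/pi in pi0 piK.
exists (sl dd); split; first exact: Ic_sl.
rewrite /expected_utility premium0 -/pi.
set E0 := expR (- (gamma * (w - d0 - pi))).
set E := expR (- (gamma * (w - dd - pi))).
have E_0 : 0 < E by exact: expR_gt0.
have hA := tail d0 (ltW d00).
have hB := tail (dd + 1) (ltW (addr_gt0 dd0 ltr01)).
have [ig Ig] := @int_g _ _ _ P X (- pi * E0) (pi * E) ((1 - pi) * E) d0 (dd + 1) _ _ mX hA hB.
set g := fun om => - pi * E0 - pi * E * ((d0 < X om)%R)%:R + (1 - pi) * E * ((dd + 1 < X om)%R)%:R.
set fI := fun om => u (w - X om + sl dd (X om) - pi).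
set f0 := fun om => u (w - X om + 0 - 0).
have mu' : measurable_fun setT u := continuous_measurable_fun (u_cont hu).
have msl : measurable_fun setT (fun om => sl dd (X om)).
  rewrite /sl; apply: measurable_fun_if => //.
  - by apply: measurable_fun_ler => //; exact: measurable_cst.
  - apply: measurable_funTS; by apply: measurable_funB.
have mfI : measurable_fun setT fI.
  apply: measurableT_comp mu' _; apply: measurable_funB; last exact: measurable_cst.
  apply: measurable_funD => //; apply: measurable_funB => //; exact: measurable_cst.
have mf0 : measurable_fun setT f0.
  apply: measurableT_comp mu' _; apply: measurable_funB; last exact: measurable_cst.
  apply: measurable_funD; last exact: measurable_cst.
  apply: measurable_funB => //; exact: measurable_cst.
have mono : forall x y, x <= y -> u x <= u y.
  move=> x y xy; have /andP[h _] := u_bounds hu g0 xy.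
  have : 0 <= expR (- (gamma * y)) * (y - x) by rewrite mulr_ge0 ?expR_ge0 // subr_ge0.
  lra.
have ubd : forall om, u (w - dd - pi) <= fI om <= u w.
  move=> om; rewrite /fI /sl; have := X0 om; case: (lerP (X om) dd) => h h0.
    by rewrite !mono //; lra.
  have -> : w - X om + (X om - dd) - pi = w - dd - pi by ring.
  by rewrite lexx mono //; lra.
set B := `|u (w - dd - pi)| + `|u w|.
have ifI : P.-integrable setT (EFin \o fI).
  apply: (le_integrable measurableT _ _ (finite_measure_integrable_cst P B measurableT)).
  - exact/measurable_EFinP.
  - move=> om _; rewrite /= lee_fin.
    have /andP[h1 h2] := ubd om.
    have := ler_norm (u (w - dd - pi)); have := ler_norm (- u (w - dd - pi)).
    have := ler_norm (u w); have := normr_ge0 (u w).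
    have := normr_ge0 (u (w - dd - pi)).
    rewrite normrN /B => *.
    have -> : `|B| = B by apply: ger0_norm; rewrite /B addr_ge0 // normr_ge0.
    rewrite /B ler_norml; apply/andP; split; lra.
have ih : P.-integrable setT (EFin \o (fun om => fI om - g om)).
  apply: (eq_integrable measurableT _ _ _ (integrableB measurableT ifI ig)).
  by move=> om _; rewrite /= EFinB.
set z := expR (- (lambda * dd)).
have z0 : 0 < z by exact: expR_gt0.
have piMz : pi <= M * z.
  by move: piK; rewrite /M /z (_ : (1 + theta) * n%:R * q * expR (- (lambda * dd)) / lambda =
    (1 + theta) * n%:R * q / lambda * expR (- (lambda * dd))) //; field; exact: lt0r_neq0.
have Mz : M * z <= 1 / 2.
  have : z <= expR (- y0).
    rewrite /z ler_expR lerN2 -ldd0; apply: ler_wpM2l; [exact: ltW|].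
    by rewrite /dd lerDl divr_ge0 // ltW.
  move=> h; have : M * z <= M * expR (- y0) by rewrite ler_wpM2l // ltW.
  lra.
have pw : forall om, f0 om <= fI om - g om.
  move=> om.
  have := @pointwise R u gamma w d0 dd pi (X om) hu g0 (X0 om) (ltW d00) _ pi0 _.
  rewrite -/E0 -/E /fI /f0 /g => h.
  have : d0 <= dd by rewrite /dd lerDl divr_ge0 // ltW.
  move=> /h; have : pi <= 1 by lra.
  move=> /[swap] /[apply] h'; lra.
have le1 := le_int_mf mf0 ih pw.
have eqB : (\int[P]_om ((fI om - g om)%:E) = \int[P]_om (fI om)%:E - \int[P]_om (g om)%:E)%E.
  rewrite -integralB_EFin //; apply: eq_integral => om _; by rewrite EFinB.
rewrite eqB in le1.
have fin := integrable_fin_num measurableT ifI.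
rewrite -(fineK fin) in le1 *.
apply: le_lt_trans le1 _.
rewrite /g Ig -EFinB lte_fin ltrBlDr ltrDl.
have hE0 : E0 = E * expR (- y1).
  rewrite /E0 /E -expRD -gdd; congr expR; ring.
have hpa : expR (- (lambda * d0)) = expR (- y0) by rewrite ldd0.
have hpb : expR (- (lambda * (dd + 1))) = z * L.
  by rewrite /z /L -expRD; congr expR; ring.
have hpb' : q * expR (- (lambda * (dd + 1))) = q * z * L by rewrite hpb mulrA.
rewrite hE0 hpa hpb'.
apply: (numeric pi0 piMz Mz z0 q0 L0 E_0 (expR_ge0 _) (expR_ge0 _) e1a e0a).
by [].
Qed.
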